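(* For a two-player stage game $G$, we have $G\notin\mathcal{G}_{LS}^{p,p}$ and $G\in\mathcal{G}_{LS}^{m,p}$ if and only if one of the following holds: (1) $|V_1^{p,p}|=0$, $|V_2^{p,p}|=0$, and condition $\mathcal{C}^{m,p}(G)$ holds; (2) $|V_1^{p,p}|=1$, $|V_2^{p,p}|=1$, and $\mathcal{C}^{m,p}(G)$ holds; (3) $|V_1^{p,p}|>1$, $|V_2^{p,p}|=1$, there do not exist $\hat a_1,a_1'\in A_1$, $\hat a_2\in A_2$ with $u_1(\hat a_1,\hat a_2)<u_1(a_1',\hat a_2)$ and $\hat a_2$ a best response to $\hat a_1$, and $\mathcal{C}^{m,p}(G)$ holds.
   Context: A two-player stage game $G$ has finite nonempty action sets $A_1,A_2$ and payoffs $u_1,u_2:A_1\times A_2\to\mathbb{R}$, extended to mixed strategies by expectation; $S_{\sigma_1}$ is the support of $\sigma_1$; best response means maximizing expected payoff against the opponent's strategy. $G(T)$ is the $T$-round repetition with realized actions observed each round and payoffs the expected sum of stage payoffs; an SPE of $G(T)$ is a strategy profile whose continuation after every history of length $k<T$ is a Nash equilibrium of $G(T-k)$. Regimes: pure-pure ($p,p$): both players restricted to actions (in the stage game and in every round, including deviations); mixed-pure ($m,p$): player 1 may mix, player 2 uses only actions; mixed-mixed ($m,m$): both may mix. For regime $r$, $\mathrm{Nash}^r(G)$ is the set of stage-game profiles available in $r$ from which no player can profitably deviate unilaterally to a strategy available in $r$, and $V_i^r=\{u_i(\sigma):\sigma\in\mathrm{Nash}^r(G)\}$. Locally suboptimal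 behavior occurs in an SPE $\mu$ of $G(T)$ (regime $r$) if for some history $h$ of length $k<T$, $(\mu_1(h),\mu_2(h))\notin\mathrm{Nash}^r(G)$. $\mathcal{G}_{LS}^r$ is the set of stage games $G$ for which there exist $T\ge1$ and an SPE of $G(T)$ in regime $r$ in which locally suboptimal behavior occurs. Condition $\mathcal{C}^{m,p}(G)$ holds iff one of: (i) $|V_1^{m,p}|>1$, $|V_2^{m,p}|>1$, and some $(\hat\sigma_1,\hat a_2)\in\Delta A_1\times A_2$ is not in $\mathrm{Nash}^{m,p}(G)$; (ii) $|V_1^{m,p}|>1$, $|V_2^{m,p}|=1$, and there exist $\hat\sigma_1\in\Delta A_1$, $a_1'\in A_1$, $\hat a_2\in A_2$ with $u_1(\hat\sigma_1,\hat a_2)<u_1(a_1',\hat a_2)$, $\hat a_2$ a best response to $\hat\sigma_1$, and, if $|S_{\hat\sigma_1}|>1$, with $D=\{u_1(\sigma)-u_1(\sigma'):\sigma,\sigma'\in\mathrm{Nash}^{m,p}(G)\}$, some $a\in S_{\hat\sigma_1}$ such that for every $a'\in S_{\hat\sigma_1}\setminus\{a\}$ there are an integer $n\ge0$ and $d_1,\dots,d_n\in D$ with $u_1(a,\hat a_2)-u_1(a',\hat a_2)=\sum_{k=1}^n d_k$; (iii) $|V_1^{m,p}|=1$, $|V_2^{m,p}|>1$, and there exist $\hat\sigma_1\in\Delta A_1$, $\hat a_2,a_2'\in A_2$ with $u_2(\hat\sigma_1,\hat a_2)<u_2(\hat\sigma_1,a_2')$ and $\hat\sigma_1$ a best response to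 $\hat a_2$. *)

(* Defs.v *)
From HB Require Import structures.
From mathcomp Require Import all_boot all_order all_algebra.
From mathcomp Require Import reals.
Set Implicit Arguments. Unset Strict Implicit. Unset Printing Implicit Defensive.
Import Order.TTheory GRing.Theory Num.Theory.
Local Open Scope ring_scope.

Inductive regime := PP | MP | MM.

Section Games.
Context {R : realType} {A1 A2 : finType}.

Definition mixed {A : finType} (s : {ffun A -> R}) : Prop :=
  (forall a, 0 <= s a) /\ \sum_a s a = 1.

Definition pure_mixed {A : finType} (a : A) : {ffun A -> R} :=
  [ffun b => (b == a)%:R].

Definition is_pure {A : finType} (s : {ffun A -> R}) : Prop :=
  exists a, s = pure_mixed a.

Definition avail1 (r : regime) (s : {ffun A1 -> R}) : Prop :=
  mixed s /\ (r = PP -> is_pure s).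
Definition avail2 (r : regime) (s : {ffun A2 -> R}) : Prop :=
  mixed s /\ (r <> MM -> is_pure s).

Definition EU (u : A1 -> A2 -> R) (s1 : {ffun A1 -> R}) (s2 : {ffun A2 -> R}) : R :=
  \sum_a1 \sum_a2 s1 a1 * s2 a2 * u a1 a2.

Definition stageNash (u1 u2 : A1 -> A2 -> R) (r : regime)
    (s1 : {ffun A1 -> R}) (s2 : {ffun A2 -> R}) : Prop :=
  [/\ avail1 r s1, avail2 r s2,
      (forall t1, avail1 r t1 -> EU u1 t1 s2 <= EU u1 s1 s2) &
      (forall t2, avail2 r t2 -> EU u2 s1 t2 <= EU u2 s1 s2)].

Definition Vpay1 (u1 u2 : A1 -> A2 -> R) (r : regime) (v : R) : Prop :=
  exists s1 s2, stageNash u1 u2 r s1 s2 /\ v = EU u1 s1 s2.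
Definition Vpay2 (u1 u2 : A1 -> A2 -> R) (r : regime) (v : R) : Prop :=
  exists s1 s2, stageNash u1 u2 r s1 s2 /\ v = EU u2 s1 s2.

Definition noVal (V : R -> Prop) : Prop := forall v, ~ V v.
Definition oneVal (V : R -> Prop) : Prop := exists v, V v /\ forall w, V w -> w = v.
Definition manyVals (V : R -> Prop) : Prop := exists v w, [/\ V v, V w & v <> w].

(* Repeated game G(T): histories are sequences of realized action profiles;
   (behavioral) strategies map histories to stage strategies. *)
Definition history := seq (A1 * A2).
Definition strat1 := history -> {ffun A1 -> R}.
Definition strat2 := history -> {ffun A2 -> R}.

Definition avail_strat1 (r : regime) (m : strat1) : Prop := forall h, avail1 r (m h).
Definition avail_strat2 (r : regime) (m : strat2) : Prop := forall h, avail2 r (m h).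

Fixpoint value (u : A1 -> A2 -> R) (n : nat) (m1 : strat1) (m2 : strat2)
    (h : history) : R :=
  match n with
  | 0 => 0
  | n'.+1 => \sum_a1 \sum_a2
      m1 h a1 * m2 h a2 * (u a1 a2 + value u n' m1 m2 (rcons h (a1, a2)))
  end.

Definition payoff (u : A1 -> A2 -> R) (n : nat) (m1 : strat1) (m2 : strat2) : R :=
  value u n m1 m2 [::].

Definition repNash (u1 u2 : A1 -> A2 -> R) (r : regime) (n : nat)
    (m1 : strat1) (m2 : strat2) : Prop :=
  [/\ avail_strat1 r m1, avail_strat2 r m2,
      (forall t1, avail_strat1 r t1 -> payoff u1 n t1 m2 <= payoff u1 n m1 m2) &
      (forall t2, avail_strat2 r t2 -> payoff u2 n m1 t2 <= payoff u2 n m1 m2)].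

Definition cont1 (m : strat1) (h : history) : strat1 := fun h' => m (h ++ h').
Definition cont2 (m : strat2) (h : history) : strat2 := fun h' => m (h ++ h').

Definition SPE (u1 u2 : A1 -> A2 -> R) (r : regime) (T : nat)
    (m1 : strat1) (m2 : strat2) : Prop :=
  avail_strat1 r m1 /\ avail_strat2 r m2 /\
  forall h : history, (size h < T)%N ->
    repNash u1 u2 r (T - size h) (cont1 m1 h) (cont2 m2 h).

Definition LS (u1 u2 : A1 -> A2 -> R) (r : regime) : Prop :=
  exists T : nat, (1 <= T)%N /\
  exists (m1 : strat1) (m2 : strat2), SPE u1 u2 r T m1 m2 /\
  exists h : history, (size h < T)%N /\ ~ stageNash u1 u2 r (m1 h) (m2 h).

Definition supp {A : finType} (s : {ffun A -> R}) : {set A} := [set a | s a != 0].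

Definition Dset (u1 u2 : A1 -> A2 -> R) (d : R) : Prop :=
  exists s1 s2 t1 t2, [/\ stageNash u1 u2 MP s1 s2, stageNash u1 u2 MP t1 t2 &
                         d = EU u1 s1 s2 - EU u1 t1 t2].

Definition Cmp (u1 u2 : A1 -> A2 -> R) : Prop :=
  [/\ manyVals (Vpay1 u1 u2 MP), manyVals (Vpay2 u1 u2 MP) &
      exists (s1 : {ffun A1 -> R}) (a2 : A2),
        mixed s1 /\ ~ stageNash u1 u2 MP s1 (pure_mixed a2)]
  \/
  [/\ manyVals (Vpay1 u1 u2 MP), oneVal (Vpay2 u1 u2 MP) &
      exists (s1 : {ffun A1 -> R}) (a1' : A1) (a2 : A2),
        [/\ mixed s1,
            EU u1 s1 (pure_mixed a2) < u1 a1' a2,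
            (forall b2 : A2, EU u2 s1 (pure_mixed b2) <= EU u2 s1 (pure_mixed a2)) &
            ((1 < #|supp s1|)%N ->
              exists2 a, a \in supp s1 &
                forall a', a' \in supp s1 -> a' != a ->
                  exists ds : seq R, (forall d, d \in ds -> Dset u1 u2 d) /\
                    u1 a a2 - u1 a' a2 = \sum_(d <- ds) d)]]
  \/
  [/\ oneVal (Vpay1 u1 u2 MP), manyVals (Vpay2 u1 u2 MP) &
      exists (s1 : {ffun A1 -> R}) (a2 a2' : A2),
        [/\ mixed s1,
            EU u2 s1 (pure_mixed a2) < EU u2 s1 (pure_mixed a2') &
            (forall t1, mixed t1 -> EU u1 t1 (pure_mixed a2) <= EU u1 s1 (pure_mixed a2))]].

End Games.

(* Main.v *)
Require Import Defs.
From HB Require Import structures.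
From mathcomp Require Import all_boot all_order all_algebra.
From mathcomp Require Import reals.
From mathcomp Require Import ring lra zify.
From Stdlib Require Import Classical.
Import Order.TTheory GRing.Theory Num.Theory.
Local Open Scope ring_scope.
Set Implicit Arguments. Unset Strict Implicit. Unset Printing Implicit Defensive.

Section Basics.
Variables (R : realType) (A1 A2 : finType).

Lemma pureE {A : finType} (a b : A) : (pure_mixed a : {ffun A -> R}) b = (b == a)%:R.
Proof. by rewrite /pure_mixed ffunE. Qed.

Lemma sum_pure {A : finType} (a : A) (F : A -> R) :
  \sum_b (pure_mixed a : {ffun A -> R}) b * F b = F a.
Proof.
rewrite (bigD1 a) //= big1 ?addr0; first by rewrite pureE eqxx mul1r.
by move=> b /negbTE nb; rewrite pureE nb mul0r.
Qed.

Lemma sum_pure_r {A : finType} (a : A) (x : R) (F : A -> R) :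
  \sum_b x * (pure_mixed a : {ffun A -> R}) b * F b = x * F a.
Proof.
rewrite -sum_pure mulr_sumr; apply: eq_bigr => b _; by rewrite mulrA [x * _]mulrC.
Qed.

Lemma mixed_pure {A : finType} (a : A) : mixed (pure_mixed a : {ffun A -> R}).
Proof.
split; first by move=> b; rewrite pureE ler0n.
by rewrite -(sum_pure a (fun _ => 1)) ; apply: eq_bigr => b _; rewrite mulr1.
Qed.

Lemma avail1_pure r (a : A1) : avail1 r (pure_mixed a : {ffun A1 -> R}).
Proof. by split; [apply: mixed_pure | exists a]. Qed.
Lemma avail2_pure r (a : A2) : avail2 r (pure_mixed a : {ffun A2 -> R}).
Proof. by split; [apply: mixed_pure | exists a]. Qed.

Lemma avail1_mixed r s : avail1 r s -> mixed (s : {ffun A1 -> R}).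
Proof. by case. Qed.
Lemma avail2_mixed r s : avail2 r s -> mixed (s : {ffun A2 -> R}).
Proof. by case. Qed.

Lemma mixed_avail1 r s : r <> PP -> mixed (s : {ffun A1 -> R}) -> avail1 r s.
Proof. by move=> hr ms; split. Qed.

Lemma EU_pure2 (u : A1 -> A2 -> R) s1 a2 :
  EU u s1 (pure_mixed a2) = \sum_a1 s1 a1 * u a1 a2.
Proof. by apply: eq_bigr => a1 _; rewrite sum_pure_r. Qed.

Lemma EU_pure1 (u : A1 -> A2 -> R) a1 s2 :
  EU u (pure_mixed a1) s2 = \sum_a2 s2 a2 * u a1 a2.
Proof.
rewrite -(sum_pure a1 (fun b => \sum_a2 s2 a2 * u b a2)) /EU.
apply: eq_bigr => b _; rewrite mulr_sumr; apply: eq_bigr => a2 _; by rewrite mulrA.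
Qed.

Lemma EU_pp (u : A1 -> A2 -> R) a1 a2 : EU u (pure_mixed a1) (pure_mixed a2) = u a1 a2.
Proof. by rewrite EU_pure1 sum_pure. Qed.

Lemma EU_dec1 (u : A1 -> A2 -> R) t s2 :
  EU u t s2 = \sum_b t b * EU u (pure_mixed b) s2.
Proof.
apply: eq_bigr => b _; rewrite EU_pure1 mulr_sumr; apply: eq_bigr => a2 _; by rewrite mulrA.
Qed.

Lemma EU_dec2 (u : A1 -> A2 -> R) s1 t :
  EU u s1 t = \sum_b t b * EU u s1 (pure_mixed b).
Proof.
rewrite /EU exchange_big; apply: eq_bigr => b _.
have := EU_pure2 u s1 b; rewrite /EU => ->; rewrite mulr_sumr.
by apply: eq_bigr => a1 _; rewrite mulrA [t b * _]mulrC.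
Qed.

Lemma mix_le {A : finType} (s : {ffun A -> R}) (f : A -> R) M :
  mixed s -> (forall b, f b <= M) -> \sum_b s b * f b <= M.
Proof.
case=> s0 s1 fM; apply: le_trans (_ : \sum_b s b * M <= M).
  by apply: ler_sum => b _; apply: ler_wpM2l.
by rewrite -mulr_suml s1 mul1r.
Qed.

Lemma mix_ge {A : finType} (s : {ffun A -> R}) (f : A -> R) M :
  mixed s -> (forall b, M <= f b) -> M <= \sum_b s b * f b.
Proof.
case=> s0 s1 fM; apply: (@le_trans _ _ (\sum_b s b * M)).
  by rewrite -mulr_suml s1 mul1r.
by apply: ler_sum => b _; apply: ler_wpM2l.
Qed.

Lemma mix_supp_eq {A : finType} (s : {ffun A -> R}) (f : A -> R) M :
  mixed s -> (forall b, s b != 0 -> f b = M) -> \sum_b s b * f b = M.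
Proof.
case=> s0 s1 fM; rewrite -[RHS]mul1r -s1 mulr_suml; apply: eq_bigr => b _.
by have [->|/fM ->] := eqVneq (s b) 0; rewrite ?mul0r.
Qed.

Lemma mix_eq_supp {A : finType} (s : {ffun A -> R}) (f : A -> R) M :
  mixed s -> (forall b, f b <= M) -> \sum_b s b * f b = M ->
  forall b, s b != 0 -> f b = M.
Proof.
case=> s0 s1 fM hs b sb.
have h0 : \sum_b s b * (M - f b) = 0.
  rewrite (eq_bigr (fun b => s b * M - s b * f b)); last by move=> ? _; rewrite mulrBr.
  by rewrite sumrB -mulr_suml s1 mul1r hs subrr.
have hp : forall c, predT c -> 0 <= s c * (M - f c).
  by move=> c _; apply: mulr_ge0 => //; rewrite subr_ge0.
have := psumr_eq0P hp h0 (i := b) isT; move/eqP.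
by rewrite mulf_eq0 (negbTE sb) /= subr_eq0 => /eqP ->.
Qed.

Lemma mix_exists {A : finType} (s : {ffun A -> R}) : mixed s -> exists b, s b != 0.
Proof.
case=> _ s1; apply: NNPP => H.
have h : forall b, s b = 0.
  by move=> b; apply/eqP; apply/negPn/negP => nb; apply: H; exists b.
by move: s1; rewrite big1 // => /eqP; rewrite eq_sym oner_eq0.
Qed.

Lemma dsum_const (u : A1 -> A2 -> R) t s c :
  mixed t -> mixed s ->
  \sum_b1 \sum_b2 t b1 * s b2 * (u b1 b2 + c) = EU u t s + c.
Proof.
move=> [_ t1] [_ s1].
rewrite (eq_bigr (fun b1 => \sum_b2 t b1 * s b2 * u b1 b2 + t b1 * c)); last first.
  move=> b1 _; rewrite (eq_bigr (fun b2 => t b1 * s b2 * u b1 b2 + t b1 * s b2 * c)).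
    by rewrite big_split /= -mulr_suml -mulr_sumr s1 mulr1.
  by move=> b2 _; rewrite mulrDr.
by rewrite big_split /= -mulr_suml t1 mul1r.
Qed.

Lemma pure_of_avail1 s : avail1 PP s -> exists a, s = pure_mixed a :> {ffun A1 -> R}.
Proof. by case=> _ /(_ erefl). Qed.
Lemma pure_of_avail2 r s : r <> MM -> avail2 r s -> exists a, s = pure_mixed a :> {ffun A2 -> R}.
Proof. by move=> hr [_ /(_ hr)]. Qed.

End Basics.


Section Value.
Variables (R : realType) (A1 A2 : finType) (u1 u2 : A1 -> A2 -> R).

Lemma stageNashP r s1 s2 :
  stageNash u1 u2 r s1 s2 <->
  [/\ avail1 r s1, avail2 r s2,
      (forall b1, EU u1 (pure_mixed b1) s2 <= EU u1 s1 s2) &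
      (forall b2, EU u2 s1 (pure_mixed b2) <= EU u2 s1 s2)].
Proof.
split.
  case=> a1 a2 h1 h2; split=> // [b1|b2]; [apply: h1 | apply: h2].
    exact: avail1_pure. exact: avail2_pure.
case=> a1 a2 h1 h2; split=> // [t1 /avail1_mixed m|t2 /avail2_mixed m].
  by rewrite EU_dec1; apply: mix_le.
by rewrite EU_dec2; apply: mix_le.
Qed.

Lemma stageNash_mixed r s1 s2 : stageNash u1 u2 r s1 s2 -> mixed s1 /\ mixed s2.
Proof. by case=> [[m1 _] [m2 _] _ _]. Qed.

Lemma value_cat (u : A1 -> A2 -> R) n (m1 : strat1) (m2 : strat2) g h :
  value u n (cont1 m1 g) (cont2 m2 g) h = value u n m1 m2 (g ++ h).
Proof.
elim: n h => [|n IH] h //=.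
apply: eq_bigr => b1 _; apply: eq_bigr => b2 _; by rewrite IH rcons_cat.
Qed.

Lemma value_ext (u : A1 -> A2 -> R) n (m1 m1' : strat1) (m2 m2' : strat2) h :
  (forall h', (size h <= size h')%N -> m1 h' = m1' h' /\ m2 h' = m2' h') ->
  value u n m1 m2 h = value u n m1' m2' h.
Proof.
elim: n h => [|n IH] h E //=.
have [-> ->] := E h (leqnn _).
apply: eq_bigr => b1 _; apply: eq_bigr => b2 _; rewrite IH // => h' hh.
by apply: E; apply: leq_trans hh; rewrite size_rcons.
Qed.

Definition onestep1 r (m1 : strat1) (m2 : strat2) g k :=
  forall t, avail1 r t ->
  \sum_b1 \sum_b2 t b1 * m2 g b2 * (u1 b1 b2 + value u1 k m1 m2 (rcons g (b1, b2)))
  <= \sum_b1 \sum_b2 m1 g b1 * m2 g b2 * (u1 b1 b2 + value u1 k m1 m2 (rcons g (b1, b2))).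

Definition onestep2 r (m1 : strat1) (m2 : strat2) g k :=
  forall t, avail2 r t ->
  \sum_b1 \sum_b2 m1 g b1 * t b2 * (u2 b1 b2 + value u2 k m1 m2 (rcons g (b1, b2)))
  <= \sum_b1 \sum_b2 m1 g b1 * m2 g b2 * (u2 b1 b2 + value u2 k m1 m2 (rcons g (b1, b2))).

Lemma SPE_onestep r T m1 m2 g :
  SPE u1 u2 r T m1 m2 -> (size g < T)%N ->
  onestep1 r m1 m2 g (T - size g).-1 /\ onestep2 r m1 m2 g (T - size g).-1.
Proof.
case=> av1 [av2 H] hg; have := H g hg.
have -> : (T - size g = (T - size g).-1.+1)%N by rewrite prednK // subn_gt0.
set k := (T - size g).-1.
case=> _ _ N1 N2; split.
- move=> t at1.
  pose t1 : strat1 := fun h' => if h' is [::] then t else m1 (g ++ h').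
  have at1' : avail_strat1 r t1 by case=> [|x h'] //=.
  have := N1 t1 at1'; rewrite /payoff /= /cont2 /cont1 !cats0.
  congr (_ <= _); apply: eq_bigr => b1 _; apply: eq_bigr => b2 _; congr (_ * (_ + _)).
    rewrite -cats1 -value_cat; apply: value_ext => h'.
    by case: h' => //.
  by rewrite -cats1 -value_cat.
- move=> t at2.
  pose t2 : strat2 := fun h' => if h' is [::] then t else m2 (g ++ h').
  have at2' : avail_strat2 r t2 by case=> [|x h'] //=.
  have := N2 t2 at2'; rewrite /payoff /= /cont2 /cont1 !cats0.
  congr (_ <= _); apply: eq_bigr => b1 _; apply: eq_bigr => b2 _; congr (_ * (_ + _)).
    rewrite -cats1 -value_cat; apply: value_ext => h'.
    by case: h' => //.
  by rewrite -cats1 -value_cat.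
Qed.

Lemma onestep_SPE r T m1 m2 :
  avail_strat1 r m1 -> avail_strat2 r m2 ->
  (forall g, (size g < T)%N ->
     onestep1 r m1 m2 g (T - size g).-1 /\ onestep2 r m1 m2 g (T - size g).-1) ->
  SPE u1 u2 r T m1 m2.
Proof.
move=> av1 av2 OS.
have osd1 : forall n g t1, avail_strat1 r t1 -> (size g + n = T)%N ->
    value u1 n t1 m2 g <= value u1 n m1 m2 g.
  elim=> [|n IH] g t1 at1 hs //=.
  have hg : (size g < T)%N by rewrite -hs; lia.
  have hk : (T - size g).-1 = n by rewrite -hs; lia.
  have [O1 _] := OS g hg; rewrite hk in O1.
  apply: le_trans (O1 _ (at1 g)).
  apply: ler_sum => b1 _; apply: ler_sum => b2 _.
  have [[t0 _] [s0 _]] := (avail1_mixed (at1 g), avail2_mixed (av2 g)).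
  apply: ler_wpM2l; first by apply: mulr_ge0.
  by rewrite lerD2l; apply: IH => //; rewrite size_rcons addSnnS.
have osd2 : forall n g t2, avail_strat2 r t2 -> (size g + n = T)%N ->
    value u2 n m1 t2 g <= value u2 n m1 m2 g.
  elim=> [|n IH] g t2 at2 hs //=.
  have hg : (size g < T)%N by rewrite -hs; lia.
  have hk : (T - size g).-1 = n by rewrite -hs; lia.
  have [_ O2] := OS g hg; rewrite hk in O2.
  apply: le_trans (O2 _ (at2 g)).
  apply: ler_sum => b1 _; apply: ler_sum => b2 _.
  have [[t0 _] [s0 _]] := (avail1_mixed (av1 g), avail2_mixed (at2 g)).
  apply: ler_wpM2l; first by apply: mulr_ge0.
  by rewrite lerD2l; apply: IH => //; rewrite size_rcons addSnnS.
split=> //; split=> // h hh; split.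
- by move=> h'; apply: av1.
- by move=> h'; apply: av2.
- move=> t1 at1; rewrite /payoff.
  pose t1' : strat1 := fun x => t1 (drop (size h) x).
  have -> : value u1 (T - size h) t1 (cont2 m2 h) [::] =
            value u1 (T - size h) (cont1 t1' h) (cont2 m2 h) [::].
    by apply: value_ext => h' _; split => //; rewrite /cont1 /t1' drop_size_cat.
  rewrite !value_cat cats0; apply: osd1; first by move=> x; apply: at1.
  by rewrite subnKC // ltnW.
- move=> t2 at2; rewrite /payoff.
  pose t2' : strat2 := fun x => t2 (drop (size h) x).
  have -> : value u2 (T - size h) (cont1 m1 h) t2 [::] =
            value u2 (T - size h) (cont1 m1 h) (cont2 t2' h) [::].
    by apply: value_ext => h' _; split => //; rewrite /cont2 /t2' drop_size_cat.
  rewrite !value_cat cats0; apply: osd2; first by move=> x; apply: at2.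
  by rewrite subnKC // ltnW.
Qed.

End Value.


Section Construct.
Variables (R : realType) (A1 A2 : finType) (u1 u2 : A1 -> A2 -> R).
Notation prof := ({ffun A1 -> R} * {ffun A2 -> R})%type.

Variables (r : regime) (s1 : {ffun A1 -> R}) (s2 : {ffun A2 -> R})
  (plan : A1 -> A2 -> nat -> prof) (L : nat).
Hypothesis av1 : avail1 r s1.
Hypothesis av2 : avail2 r s2.
Hypothesis planN : forall b1 b2 j, stageNash u1 u2 r (plan b1 b2 j).1 (plan b1 b2 j).2.

Definition cm1 : strat1 := fun h =>
  match h with [::] => s1 | x :: h' => (plan x.1 x.2 (size h')).1 end.
Definition cm2 : strat2 := fun h =>
  match h with [::] => s2 | x :: h' => (plan x.1 x.2 (size h')).2 end.

Lemma value_plan (u : A1 -> A2 -> R) n x h :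
  value u n cm1 cm2 (x :: h) =
  \sum_(j < n) EU u (plan x.1 x.2 (size h + j)).1 (plan x.1 x.2 (size h + j)).2.
Proof.
elim: n h => [|n IH] h; first by rewrite big_ord0.
rewrite /= big_ord_recl addn0.
have [m1 m2] := stageNash_mixed (planN x.1 x.2 (size h)).
rewrite (eq_bigr (fun b1 => \sum_b2 (plan x.1 x.2 (size h)).1 b1 * (plan x.1 x.2 (size h)).2 b2 *
   (u b1 b2 + \sum_(j < n) EU u (plan x.1 x.2 (size h + j.+1)).1 (plan x.1 x.2 (size h + j.+1)).2))).
  by rewrite dsum_const.
move=> b1 _; apply: eq_bigr => b2 _; rewrite -rcons_cons IH size_rcons.
by congr (_ * (_ + _)); apply: eq_bigr => j _; rewrite addSnnS.
Qed.

Definition Cval (u : A1 -> A2 -> R) b1 b2 :=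
  \sum_(j < L) EU u (plan b1 b2 j).1 (plan b1 b2 j).2.

Hypothesis root1 : forall t, avail1 r t ->
  \sum_b1 \sum_b2 t b1 * s2 b2 * (u1 b1 b2 + Cval u1 b1 b2)
  <= \sum_b1 \sum_b2 s1 b1 * s2 b2 * (u1 b1 b2 + Cval u1 b1 b2).
Hypothesis root2 : forall t, avail2 r t ->
  \sum_b1 \sum_b2 s1 b1 * t b2 * (u2 b1 b2 + Cval u2 b1 b2)
  <= \sum_b1 \sum_b2 s1 b1 * s2 b2 * (u2 b1 b2 + Cval u2 b1 b2).

Lemma construct_SPE : SPE u1 u2 r L.+1 cm1 cm2.
Proof.
apply: onestep_SPE.
- by case=> [|x h] //=; case: (planN x.1 x.2 (size h)).
- by case=> [|x h] //=; case: (planN x.1 x.2 (size h)).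
case=> [|x h] hs.
  rewrite subn0 /=; split.
    move=> t at1; have := root1 at1; congr (_ <= _);
    apply: eq_bigr => b1 _; apply: eq_bigr => b2 _; by rewrite value_plan.
  move=> t at2; have := root2 at2; congr (_ <= _);
  apply: eq_bigr => b1 _; apply: eq_bigr => b2 _; by rewrite value_plan.
set k := (_ - _).-1.
have E : forall (u : A1 -> A2 -> R) y, value u k cm1 cm2 (rcons (x :: h) y) =
   \sum_(j < k) EU u (plan x.1 x.2 ((size h).+1 + j)).1 (plan x.1 x.2 ((size h).+1 + j)).2.
  by move=> u y; rewrite rcons_cons value_plan size_rcons.
have [N1a N2a N1 N2] := planN x.1 x.2 (size h).
have [mp1 mp2] := stageNash_mixed (planN x.1 x.2 (size h)).
split.
- move=> t at1; rewrite /=.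
  under eq_bigr do under eq_bigr do rewrite E.
  under [X in _ <= X]eq_bigr do under eq_bigr do rewrite E.
  rewrite (@dsum_const R A1 A2 u1 t (plan x.1 x.2 (size h)).2) //; last exact: avail1_mixed at1.
  rewrite (@dsum_const R A1 A2 u1 (plan x.1 x.2 (size h)).1 (plan x.1 x.2 (size h)).2) //.
  by rewrite lerD2r; apply: N1.
- move=> t at2; rewrite /=.
  under eq_bigr do under eq_bigr do rewrite E.
  under [X in _ <= X]eq_bigr do under eq_bigr do rewrite E.
  rewrite (@dsum_const R A1 A2 u2 (plan x.1 x.2 (size h)).1 t) //; last exact: avail2_mixed at2.
  rewrite (@dsum_const R A1 A2 u2 (plan x.1 x.2 (size h)).1 (plan x.1 x.2 (size h)).2) //.
  by rewrite lerD2r; apply: N2.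
Qed.

Lemma construct_LS : ~ stageNash u1 u2 r s1 s2 -> LS u1 u2 r.
Proof.
move=> nN; exists L.+1; split => //; exists cm1, cm2; split; first exact: construct_SPE.
by exists [::].
Qed.

End Construct.


Section Pure.
Variables (R : realType) (A1 A2 : finType) (u1 u2 : A1 -> A2 -> R).
Notation prof := ({ffun A1 -> R} * {ffun A2 -> R})%type.

Lemma sum_pure_l1 a1 (t : {ffun A2 -> R}) (F : A1 -> A2 -> R) :
  \sum_b1 \sum_b2 (pure_mixed a1 : {ffun A1 -> R}) b1 * t b2 * F b1 b2 = \sum_b2 t b2 * F a1 b2.
Proof.
rewrite -(sum_pure a1 (fun b1 => \sum_b2 t b2 * F b1 b2)).
apply: eq_bigr => b1 _; rewrite mulr_sumr; apply: eq_bigr => b2 _; by rewrite mulrA.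
Qed.

Lemma sum_pure_r1 a2 (t : {ffun A1 -> R}) (F : A1 -> A2 -> R) :
  \sum_b1 \sum_b2 t b1 * (pure_mixed a2 : {ffun A2 -> R}) b2 * F b1 b2 = \sum_b1 t b1 * F b1 a2.
Proof. by apply: eq_bigr => b1 _; rewrite sum_pure_r. Qed.

Lemma kbound {A : finType} (g : A -> R) d : 0 < d -> exists k : nat, forall b, g b <= k%:R * d.
Proof.
move=> d0; set M := \sum_b `|g b|.
have M0 : 0 <= M by apply: sumr_ge0.
have hk := archi_boundP (divr_ge0 M0 (ltW d0)).
exists (Num.Def.archi_bound (M / d)) => b.
have gM : g b <= M.
  apply: le_trans (ler_norm _) _.
  by rewrite /M (bigD1 b) //= lerDl; apply: sumr_ge0.
apply: le_trans gM _; apply: ltW.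
by rewrite -ltr_pdivrMr.
Qed.

Lemma incentive {A : finType} (g : A -> R) (P : prof -> Prop) (e : prof -> R) :
  (exists N0, P N0) ->
  ((forall b, g b <= 0) \/ exists hi lo, [/\ P hi, P lo & e lo < e hi]) ->
  exists hi lo, [/\ P hi, P lo, e lo <= e hi &
     exists k : nat, forall k' : nat, (k <= k')%N -> forall b, g b <= k'%:R * (e hi - e lo)].
Proof.
move=> [N0 PN0] [hg|[hi [lo [Ph Pl elt]]]].
  exists N0, N0; split=> //; exists 0%N => k' _ b; by rewrite subrr mulr0.
exists hi, lo; split=> //; first exact: ltW.
have d0 : 0 < e hi - e lo by rewrite subr_gt0.
have [k hk] := kbound g d0.
exists k => k' kk' b; apply: le_trans (hk b) _; apply: ler_wpM2r; first exact: ltW.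
by rewrite ler_nat.
Qed.

Lemma sum_split2 (F : prof -> R) (P Q : prof) k :
  \sum_(j < k + k) F (if (j < k)%N then P else Q) = F P *+ k + F Q *+ k.
Proof.
rewrite big_split_ord /=.
rewrite (eq_bigr (fun _ => F P)); last by move=> i _; rewrite ltn_ord.
rewrite [X in _ + X](eq_bigr (fun _ => F Q)); last by move=> i _; rewrite ltnNge leq_addr.
by rewrite !sumr_const !card_ord.
Qed.

Lemma pure_LS r a1 a2 :
  ~ stageNash u1 u2 r (pure_mixed a1) (pure_mixed a2) ->
  (exists N0 : prof, stageNash u1 u2 r N0.1 N0.2) ->
  ((forall b1, u1 b1 a2 <= u1 a1 a2) \/
     exists hi lo : prof, [/\ stageNash u1 u2 r hi.1 hi.2, stageNash u1 u2 r lo.1 lo.2 &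
                            EU u1 lo.1 lo.2 < EU u1 hi.1 hi.2]) ->
  ((forall b2, u2 a1 b2 <= u2 a1 a2) \/
     exists hi lo : prof, [/\ stageNash u1 u2 r hi.1 hi.2, stageNash u1 u2 r lo.1 lo.2 &
                            EU u2 lo.1 lo.2 < EU u2 hi.1 hi.2]) ->
  LS u1 u2 r.
Proof.
move=> nN N0 H1 H2.
have H1' : (forall b, u1 b a2 - u1 a1 a2 <= 0) \/ exists hi lo : prof,
   [/\ stageNash u1 u2 r hi.1 hi.2, stageNash u1 u2 r lo.1 lo.2 & EU u1 lo.1 lo.2 < EU u1 hi.1 hi.2].
  by case: H1 => [h|h]; [left => b; rewrite subr_le0; apply: h | right].
have H2' : (forall b, u2 a1 b - u2 a1 a2 <= 0) \/ exists hi lo : prof,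
   [/\ stageNash u1 u2 r hi.1 hi.2, stageNash u1 u2 r lo.1 lo.2 & EU u2 lo.1 lo.2 < EU u2 hi.1 hi.2].
  by case: H2 => [h|h]; [left => b; rewrite subr_le0; apply: h | right].
have [hi1 [lo1 [Nh1 Nl1 le1 [k1 K1]]]] :=
  @incentive A1 (fun b => u1 b a2 - u1 a1 a2) (fun p => stageNash u1 u2 r p.1 p.2)
     (fun p => EU u1 p.1 p.2) N0 H1'.
have [hi2 [lo2 [Nh2 Nl2 le2 [k2 K2]]]] :=
  @incentive A2 (fun b => u2 a1 b - u2 a1 a2) (fun p => stageNash u1 u2 r p.1 p.2)
     (fun p => EU u2 p.1 p.2) N0 H2'.
set k := (k1 + k2)%N.
pose X b1 (b2 : A2) : prof := if b1 != a1 then lo1 else hi1.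
pose Y b1 b2 : prof := if b1 != a1 then hi2 else if b2 != a2 then lo2 else hi2.
pose plan b1 b2 j : prof := if (j < k)%N then X b1 b2 else Y b1 b2.
have PN : forall b1 b2 j, stageNash u1 u2 r (plan b1 b2 j).1 (plan b1 b2 j).2.
  by move=> b1 b2 j; rewrite /plan /X /Y; do !case: ifP.
have CE : forall u b1 b2, Cval plan (k + k) u b1 b2 =
    EU u (X b1 b2).1 (X b1 b2).2 *+ k + EU u (Y b1 b2).1 (Y b1 b2).2 *+ k.
  move=> u b1 b2; rewrite /Cval.
  exact: (sum_split2 (fun p => EU u p.1 p.2) (X b1 b2) (Y b1 b2) k).
apply: (@construct_LS R A1 A2 u1 u2 r _ _ plan (k + k)) => //.
- exact: avail1_pure.
- exact: avail2_pure.
- move=> t /avail1_mixed mt; rewrite !sum_pure_r1 sum_pure.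
  apply: mix_le => // b1; rewrite !CE /X /Y !eqxx /=.
  have [->|nb] := eqVneq b1 a1; first by [].
  have := K1 k (leq_addr _ _) b1; rewrite /= mulr_natl mulrnBl; lra.
- move=> t /avail2_mixed mt; rewrite !sum_pure_l1 sum_pure.
  apply: mix_le => // b2; rewrite !CE /X /Y !eqxx /=.
  have [->|nb] := eqVneq b2 a2; first by [].
  have := K2 k (leq_addl _ _) b2; rewrite /= mulr_natl mulrnBl; lra.
- exact: nN.
Qed.

End Pure.


Section Mixed.
Variables (R : realType) (A1 A2 : finType) (u1 u2 : A1 -> A2 -> R).
Notation prof := ({ffun A1 -> R} * {ffun A2 -> R})%type.
Notation NashMP p := (stageNash u1 u2 MP p.1 p.2).
Definition e1 (p : prof) := EU u1 p.1 p.2.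

Lemma pairs_of_ds (ds : seq R) : (forall d, d \in ds -> Dset u1 u2 d) ->
  exists Lt : seq (prof * prof), (forall p, p \in Lt -> NashMP p.1 /\ NashMP p.2) /\
    \sum_(p <- Lt) (e1 p.1 - e1 p.2) = \sum_(d <- ds) d.
Proof.
elim: ds => [|d ds IH] H; first by exists [::]; split => //; rewrite !big_nil.
have [|Lt [HL HS]] := IH; first by move=> x hx; apply: H; rewrite inE hx orbT.
have [x1 [x2 [y1 [y2 [Nx Ny ->]]]]] := H d (mem_head _ _).
exists (((x1, x2), (y1, y2)) :: Lt); split.
  by move=> p; rewrite inE => /orP [/eqP ->|/HL].
by rewrite !big_cons HS.
Qed.

Definition sel (t : A1 * (prof * prof)) b := if t.1 == b then t.2.1 else t.2.2.

Lemma build_list (a : A1) (a2 : A2) (l : seq A1) : uniq l -> a \notin l ->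
  (forall b, b \in l -> exists ds : seq R, (forall d, d \in ds -> Dset u1 u2 d) /\
                          u1 a a2 - u1 b a2 = \sum_(d <- ds) d) ->
  exists Ls : seq (A1 * (prof * prof)),
    (forall t, t \in Ls -> NashMP t.2.1 /\ NashMP t.2.2) /\
    forall b, \sum_(t <- Ls) e1 (sel t b) =
       \sum_(t <- Ls) e1 t.2.2 + (if b \in l then u1 a a2 - u1 b a2 else 0).
Proof.
elim: l => [|c l IH] ul al H.
  by exists [::]; split => // b; rewrite !big_nil addr0.
move: ul => /= /andP [cl ul]; move: al; rewrite inE negb_or => /andP [ac al].
have [|Ls [HL HS]] := IH ul al; first by move=> b bl; apply: H; rewrite inE bl orbT.
have [ds [Hd Hs]] := H c (mem_head _ _).
have [Lt [HLt HSt]] := pairs_of_ds Hd.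
exists ([seq (c, p) | p <- Lt] ++ Ls); split.
  move=> t; rewrite mem_cat => /orP [/mapP [p pin ->]|/HL //]; exact: HLt.
move=> b; rewrite !big_cat !big_map /= HS inE.
have [<-|nb] := eqVneq c b.
  rewrite (negbTE cl) /= addr0.
  have -> : \sum_(j <- Lt) e1 (sel (c, j) c) = \sum_(j <- Lt) e1 j.1.
    by apply: eq_bigr => j _; rewrite /sel /= eqxx.
  have : \sum_(j <- Lt) e1 j.1 = \sum_(j <- Lt) e1 j.2 + \sum_(p <- Lt) (e1 p.1 - e1 p.2).
    by rewrite sumrB addrC subrK.
  move=> ->; rewrite HSt -Hs; ring.
rewrite /=.
have -> : \sum_(j <- Lt) e1 (sel (c, j) b) = \sum_(j <- Lt) e1 j.2.
  by apply: eq_bigr => j _; rewrite /sel /= (negbTE nb).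
ring.
Qed.

Lemma mixed_LS (s1 : {ffun A1 -> R}) a a1' a2 :
  mixed s1 -> s1 a != 0 ->
  EU u1 s1 (pure_mixed a2) < u1 a1' a2 ->
  (forall b2, EU u2 s1 (pure_mixed b2) <= EU u2 s1 (pure_mixed a2)) ->
  (forall a', s1 a' != 0 -> a' != a -> exists ds : seq R,
      (forall d, d \in ds -> Dset u1 u2 d) /\ u1 a a2 - u1 a' a2 = \sum_(d <- ds) d) ->
  manyVals (Vpay1 u1 u2 MP) -> oneVal (Vpay2 u1 u2 MP) -> LS u1 u2 MP.
Proof.
move=> ms1 sa lt1 BR2 HD [v [w [[x1 [x2 [Nx ->]]] [y1 [y2 [Ny ->]]] vw]]] [v2 [_ V2]].
have [Nhi [Nlo [Nh Nl ehl]]] : exists Nhi Nlo : prof, [/\ NashMP Nhi, NashMP Nlo & e1 Nlo < e1 Nhi].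
  have [lt|gt] : EU u1 x1 x2 < EU u1 y1 y2 \/ EU u1 y1 y2 < EU u1 x1 x2.
    by move: vw => /eqP; rewrite neq_lt => /orP.
    by exists (y1, y2), (x1, x2).
  by exists (x1, x2), (y1, y2).
pose l := [seq b <- enum A1 | (s1 b != 0) && (b != a)].
have ul : uniq l by rewrite filter_uniq // enum_uniq.
have inl : forall b, (b \in l) = (s1 b != 0) && (b != a).
  by move=> b; rewrite mem_filter mem_enum andbT.
have al : a \notin l by rewrite inl eqxx andbF.
have [Ls [HL HS]] := @build_list a a2 l ul al
   (fun b bl => ltac:(move: bl; rewrite inl => /andP [h1 h2]; exact: HD h1 h2)).
have [k Hk] := kbound (fun b => u1 b a2 - u1 a a2) (ltac:(by rewrite subr_gt0) : 0 < e1 Nhi - e1 Nlo).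
pose t0 : A1 * (prof * prof) := (a, (Nhi, Nhi)).
pose plan (b1 : A1) (b2 : A2) j : prof :=
  if (j < size Ls)%N then sel (nth t0 Ls j) b1 else (if s1 b1 != 0 then Nhi else Nlo).
have PN : forall b1 b2 j, NashMP (plan b1 b2 j).
  move=> b1 b2 j; rewrite /plan; case: ifP => hj; last by case: ifP.
  have := HL _ (mem_nth t0 hj); rewrite /sel; case: ifP => _ [] //.
have C1 : forall b1 b2, Cval plan (size Ls + k) u1 b1 b2 =
    \sum_(t <- Ls) e1 (sel t b1) + e1 (if s1 b1 != 0 then Nhi else Nlo) *+ k.
  move=> b1 b2; rewrite /Cval big_split_ord /=; congr (_ + _).
    rewrite (big_nth t0) big_mkord; apply: eq_bigr => i _; by rewrite /plan ltn_ord.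
  rewrite (eq_bigr (fun _ => e1 (if s1 b1 != 0 then Nhi else Nlo))).
    by rewrite sumr_const card_ord.
  by move=> i _; rewrite /plan ltnNge leq_addr.
have C2 : forall b1 b2, Cval plan (size Ls + k) u2 b1 b2 = v2 *+ (size Ls + k).
  move=> b1 b2; rewrite /Cval (eq_bigr (fun _ => v2)); first by rewrite sumr_const card_ord.
  move=> i _; apply: V2; by exists (plan b1 b2 i).1, (plan b1 b2 i).2.
set base := \sum_(t <- Ls) e1 t.2.2.
set M := u1 a a2 + base + e1 Nhi *+ k.
have FM : forall b1, s1 b1 != 0 -> u1 b1 a2 + Cval plan (size Ls + k) u1 b1 a2 = M.
  move=> b1 sb; rewrite C1 HS sb inl sb /=.
  by have [->|nb] := eqVneq b1 a; rewrite /M /base /=; ring.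
have FL : forall b1, u1 b1 a2 + Cval plan (size Ls + k) u1 b1 a2 <= M.
  move=> b1; have [sb|sb] := eqVneq (s1 b1) 0; last by rewrite FM.
  rewrite C1 HS inl sb eqxx /= addr0 /M /base.
  have := Hk b1; rewrite /= mulr_natl mulrnBl; lra.
apply: (@construct_LS R A1 A2 u1 u2 MP s1 (pure_mixed a2) plan (size Ls + k)) => //.
- exact: avail2_pure.
- move=> t /avail1_mixed mt; rewrite !sum_pure_r1.
  by apply: (le_trans (mix_le mt FL)); rewrite (mix_supp_eq ms1 FM).
- move=> t at2; have hMM : MP <> MM by []. 
  have [b2 ->] := pure_of_avail2 hMM at2.
  under eq_bigr do under eq_bigr do rewrite C2.
  under [X in _ <= X]eq_bigr do under eq_bigr do rewrite C2.
  rewrite (@dsum_const R A1 A2 u2 s1 (pure_mixed b2)) //; last exact: mixed_pure.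
  rewrite (@dsum_const R A1 A2 u2 s1 (pure_mixed a2)) //; last exact: mixed_pure.
  by rewrite lerD2r.
- case/stageNashP => _ _ B1 _; have := B1 a1'; rewrite EU_pp; lra.
Qed.

End Mixed.


Section Necessity.
Variables (R : realType) (A1 A2 : finType) (u1 u2 : A1 -> A2 -> R).

Definition atmost1 (V : R -> Prop) := forall v w, V v -> V w -> v = w.

Lemma deepest r : LS u1 u2 r -> exists T m1 m2 h,
  [/\ SPE u1 u2 r T m1 m2, (size h < T)%N, ~ stageNash u1 u2 r (m1 h) (m2 h) &
      forall g, (size h < size g)%N -> (size g < T)%N -> stageNash u1 u2 r (m1 g) (m2 g)].
Proof.
case=> T [_ [m1 [m2 [S [h0 [hs0 nN0]]]]]].
suff : forall n h, (T - size h <= n)%N -> (size h < T)%N -> ~ stageNash u1 u2 r (m1 h) (m2 h) ->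
  exists h', [/\ (size h' < T)%N, ~ stageNash u1 u2 r (m1 h') (m2 h') &
      forall g, (size h' < size g)%N -> (size g < T)%N -> stageNash u1 u2 r (m1 g) (m2 g)].
  move/(_ _ h0 (leqnn _) hs0 nN0) => [h' [H1 H2 H3]].
  by exists T, m1, m2, h'.
elim=> [|n IH] h hn hs nN; first by move: hn; rewrite leqn0 subn_eq0 leqNgt hs.
case: (classic (exists g, [/\ (size h < size g)%N, (size g < T)%N &
                              ~ stageNash u1 u2 r (m1 g) (m2 g)])).
  case=> g [g1 g2 g3]; apply: (IH g) => //; lia.
move=> H; exists h; split=> // g g1 g2; apply: NNPP => ng; apply: H; by exists g.
Qed.

Variables (r : regime) (T : nat) (m1 : @strat1 R A1 A2) (m2 : @strat2 R A1 A2).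

Lemma cv (u : A1 -> A2 -> R) v n g :
  (forall g', (size g <= size g')%N -> (size g' < size g + n)%N ->
      stageNash u1 u2 r (m1 g') (m2 g') /\ EU u (m1 g') (m2 g') = v) ->
  value u n m1 m2 g = v *+ n.
Proof.
elim: n g => [|n IH] g H //=.
have [N E] : stageNash u1 u2 r (m1 g) (m2 g) /\ EU u (m1 g) (m2 g) = v.
  by apply: H => //; lia.
have [ms1 ms2] := stageNash_mixed N.
rewrite (eq_bigr (fun b1 => \sum_b2 m1 g b1 * m2 g b2 * (u b1 b2 + v *+ n))).
  by rewrite (@dsum_const R A1 A2 u (m1 g) (m2 g)) // E mulrS.
move=> b1 _; apply: eq_bigr => b2 _; rewrite IH // => g' h1 h2; apply: H; rewrite size_rcons in h1 h2; lia.
Qed.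

Hypothesis S : SPE u1 u2 r T m1 m2.

Lemma const_cont (u : A1 -> A2 -> R)
  (HV : forall s1 s2 t1 t2, stageNash u1 u2 r s1 s2 -> stageNash u1 u2 r t1 t2 ->
         EU u s1 s2 = EU u t1 t2) h :
  (size h < T)%N ->
  (forall g, (size h < size g)%N -> (size g < T)%N -> stageNash u1 u2 r (m1 g) (m2 g)) ->
  forall y y', value u (T - size h).-1 m1 m2 (rcons h y) = value u (T - size h).-1 m1 m2 (rcons h y').
Proof.
move=> hs D y y'; set k := (T - size h).-1.
have [k0|kp] := eqVneq k 0%N; first by rewrite k0.
have Ny : stageNash u1 u2 r (m1 (rcons h y)) (m2 (rcons h y)).
  by apply: D; rewrite size_rcons //; rewrite /k in kp; lia.
set v := EU u (m1 (rcons h y)) (m2 (rcons h y)).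
have E : forall z, value u k m1 m2 (rcons h z) = v *+ k.
  move=> z; apply: cv => g' h1 h2; rewrite size_rcons in h1 h2.
  have Ng : stageNash u1 u2 r (m1 g') (m2 g') by apply: D; rewrite /k in h2; lia.
  by split => //; apply: HV.
by rewrite !E.
Qed.

Lemma BR_const h :
  (size h < T)%N ->
  (forall g, (size h < size g)%N -> (size g < T)%N -> stageNash u1 u2 r (m1 g) (m2 g)) ->
  (atmost1 (Vpay1 u1 u2 r) -> forall b1, EU u1 (pure_mixed b1) (m2 h) <= EU u1 (m1 h) (m2 h)) /\
  (atmost1 (Vpay2 u1 u2 r) -> forall b2, EU u2 (m1 h) (pure_mixed b2) <= EU u2 (m1 h) (m2 h)).
Proof.
move=> hs D; have [O1 O2] := SPE_onestep S hs.
case: S => av1 [av2 _].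
have ms1 := avail1_mixed (av1 h); have ms2 := avail2_mixed (av2 h).
have [a1e _] := mix_exists ms1; have [a2e _] := mix_exists ms2.
split.
- move=> A b1; have := O1 _ (avail1_pure R r b1).
  set c := value u1 (T - size h).-1 m1 m2 (rcons h (a1e, a2e)).
  have CC := @const_cont u1 _ h hs D.
  have HV : forall s1 s2 t1 t2, stageNash u1 u2 r s1 s2 -> stageNash u1 u2 r t1 t2 ->
         EU u1 s1 s2 = EU u1 t1 t2.
    move=> s1 s2 t1 t2 Ns Nt; apply: A; [by exists s1, s2 | by exists t1, t2].
  under eq_bigr do under eq_bigr do rewrite (CC HV _ (a1e, a2e)).
  under [X in _ <= X]eq_bigr do under eq_bigr do rewrite (CC HV _ (a1e, a2e)).
  rewrite (@dsum_const R A1 A2 u1 (pure_mixed b1) (m2 h)) //; last exact: mixed_pure.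
  by rewrite (@dsum_const R A1 A2 u1 (m1 h) (m2 h)) // lerD2r.
- move=> A b2; have := O2 _ (avail2_pure R r b2).
  have CC := @const_cont u2 _ h hs D.
  have HV : forall s1 s2 t1 t2, stageNash u1 u2 r s1 s2 -> stageNash u1 u2 r t1 t2 ->
         EU u2 s1 s2 = EU u2 t1 t2.
    move=> s1 s2 t1 t2 Ns Nt; apply: A; [by exists s1, s2 | by exists t1, t2].
  under eq_bigr do under eq_bigr do rewrite (CC HV _ (a1e, a2e)).
  under [X in _ <= X]eq_bigr do under eq_bigr do rewrite (CC HV _ (a1e, a2e)).
  rewrite (@dsum_const R A1 A2 u2 (m1 h) (pure_mixed b2)) //; last exact: mixed_pure.
  by rewrite (@dsum_const R A1 A2 u2 (m1 h) (m2 h)) // lerD2r.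
Qed.

End Necessity.

Section MPnec.
Variables (R : realType) (A1 A2 : finType) (u1 u2 : A1 -> A2 -> R).
Variables (T : nat) (m1 : @strat1 R A1 A2) (m2 : @strat2 R A1 A2).
Hypothesis S : SPE u1 u2 MP T m1 m2.

Definition fcont g a2 b := u1 b a2 + value u1 (T - size g).-1 m1 m2 (rcons g (b, a2)).

Lemma os_pure g a2 : (size g < T)%N -> m2 g = pure_mixed a2 ->
  (forall b, fcont g a2 b <= \sum_b1 m1 g b1 * fcont g a2 b1) /\
  value u1 (T - size g) m1 m2 g = \sum_b1 m1 g b1 * fcont g a2 b1.
Proof.
move=> hs E; have [O1 _] := SPE_onestep S hs; split.
  move=> b; have := O1 _ (avail1_pure R MP b); rewrite E !sum_pure_r1 sum_pure.
  by rewrite /fcont.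
have -> : (T - size g = (T - size g).-1.+1)%N by rewrite prednK // subn_gt0.
by rewrite /= E sum_pure_r1 /fcont.
Qed.

Lemma pv n g : (size g + n = T)%N ->
  (forall g', (size g <= size g')%N -> (size g' < T)%N -> stageNash u1 u2 MP (m1 g') (m2 g')) ->
  exists ds : seq R, [/\ size ds = n, (forall d, d \in ds -> Vpay1 u1 u2 MP d) &
     value u1 n m1 m2 g = \sum_(d <- ds) d].
Proof.
elim: n g => [|n IH] g hs D; first by exists [::]; split => //; rewrite big_nil.
have hg : (size g < T)%N by lia.
have Ng := D g (leqnn _) hg.
have [a2 E] : exists a2, m2 g = pure_mixed a2.
  by case: Ng => _ [_ /(_ (ltac:(by []) : MP <> MM))].
have [F V] := os_pure hg E.
have [ms1 _] := stageNash_mixed Ng.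
have [b0 sb0] := mix_exists ms1.
have fb0 := mix_eq_supp ms1 F (erefl _) sb0.
have hk : (T - size g).-1 = n by lia.
have [ds [sz Vds Eds]] := IH (rcons g (b0, a2)) (ltac:(rewrite size_rcons; lia))
   (fun g' h1 h2 => D g' (ltac:(rewrite size_rcons in h1; lia)) h2).
have U : u1 b0 a2 = EU u1 (m1 g) (m2 g).
  case/stageNashP: Ng => _ _ B1 _.
  rewrite E EU_pure2; apply: (mix_eq_supp ms1 _ (erefl _) sb0) => b.
  by have := B1 b; rewrite E EU_pp EU_pure2.
exists (EU u1 (m1 g) (m2 g) :: ds); split.
- by rewrite /= sz.
- by move=> d; rewrite inE => /orP [/eqP ->|/Vds //]; exists (m1 g), (m2 g).
have -> : n.+1 = (T - size g)%N by lia.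
- by rewrite V -fb0 big_cons /fcont -U hk Eds.
Qed.

Lemma zipdiff (V : R -> Prop) (xs ys : seq R) : size xs = size ys ->
  (forall x, x \in xs -> V x) -> (forall y, y \in ys -> V y) ->
  exists ds : seq R, (forall d, d \in ds -> exists x y, [/\ V x, V y & d = x - y]) /\
     \sum_(x <- xs) x - \sum_(y <- ys) y = \sum_(d <- ds) d.
Proof.
elim: xs ys => [|x xs IH] [|y ys] sz Vx Vy //.
  by exists [::]; split => //; rewrite !big_nil subrr.
case: sz => sz.
have Vx' : forall z, z \in xs -> V z by move=> z hz; apply: Vx; rewrite inE hz orbT.
have Vy' : forall z, z \in ys -> V z by move=> z hz; apply: Vy; rewrite inE hz orbT.
have [ds [Hd Hs]] := IH ys sz Vx' Vy'.
exists ((x - y) :: ds); split.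
  move=> d; rewrite inE => /orP [/eqP ->|/Hd //]; exists x, y; split => //.
    by apply: Vx; rewrite mem_head.
  by apply: Vy; rewrite mem_head.
rewrite !big_cons -Hs; ring.
Qed.

Lemma Dcond h : (size h < T)%N ->
  (forall g, (size h < size g)%N -> (size g < T)%N -> stageNash u1 u2 MP (m1 g) (m2 g)) ->
  forall a2, m2 h = pure_mixed a2 -> forall a a', m1 h a != 0 -> m1 h a' != 0 ->
  exists ds : seq R, (forall d, d \in ds -> Dset u1 u2 d) /\ u1 a a2 - u1 a' a2 = \sum_(d <- ds) d.
Proof.
move=> hs D a2 E a a' sa sa'.
have [F _] := os_pure hs E.
case: S => av1 _; have ms1 := avail1_mixed (av1 h).
have fa := mix_eq_supp ms1 F (erefl _) sa.
have fa' := mix_eq_supp ms1 F (erefl _) sa'.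
have D' : forall b, forall g', (size (rcons h (b, a2)) <= size g')%N -> (size g' < T)%N ->
    stageNash u1 u2 MP (m1 g') (m2 g').
  by move=> b g' h1 h2; apply: D => //; rewrite size_rcons in h1.
have sz : forall b, (size (rcons h (b, a2)) + (T - size h).-1 = T)%N.
  by move=> b; rewrite size_rcons; lia.
have [ds1 [s1 V1 E1]] := pv (sz a) (D' a).
have [ds2 [s2 V2 E2]] := pv (sz a') (D' a').
have [ds [Hd Hs]] := zipdiff (etrans s2 (esym s1)) V2 V1.
exists ds; split.
  move=> d /Hd [x [y [[x1 [x2 [Nx ->]]] [y1 [y2 [Ny ->]]] ->]]].
  by exists x1, x2, y1, y2.
rewrite -Hs -E1 -E2.
move: fa fa'; rewrite /fcont => fa fa'.
have := etrans fa (esym fa'); lra.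
Qed.

End MPnec.


Section Main.
Variables (R : realType) (A1 A2 : finType) (u1 u2 : A1 -> A2 -> R).
Notation prof := ({ffun A1 -> R} * {ffun A2 -> R})%type.

Lemma many_or_atmost (V : R -> Prop) : manyVals V \/ atmost1 V.
Proof.
case: (classic (manyVals V)) => [|H]; [by left | right => v w Vv Vw].
apply: NNPP => nvw; apply: H; by exists v, w.
Qed.

Lemma one_atmost (V : R -> Prop) : oneVal V -> atmost1 V.
Proof. by case=> v [_ H] x y /H -> /H ->. Qed.
Lemma no_atmost (V : R -> Prop) : noVal V -> atmost1 V.
Proof. by move=> H x y /H. Qed.
Lemma atmost_one (V : R -> Prop) v : atmost1 V -> V v -> oneVal V.
Proof. by move=> A Vv; exists v; split => // w Vw; apply: A. Qed.
Lemma many_not_atmost (V : R -> Prop) : manyVals V -> ~ atmost1 V.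
Proof. by case=> v [w [Vv Vw vw]] A; apply: vw; apply: A. Qed.



Lemma V1_V2 r v : Vpay1 u1 u2 r v -> exists w, Vpay2 u1 u2 r w.
Proof. by case=> s1 [s2 [N _]]; exists (EU u2 s1 s2), s1, s2. Qed.
Lemma V2_V1 r v : Vpay2 u1 u2 r v -> exists w, Vpay1 u1 u2 r w.
Proof. by case=> s1 [s2 [N _]]; exists (EU u1 s1 s2), s1, s2. Qed.

Lemma many_hilo1 r : manyVals (Vpay1 u1 u2 r) ->
  exists hi lo : prof, [/\ stageNash u1 u2 r hi.1 hi.2, stageNash u1 u2 r lo.1 lo.2 &
                          EU u1 lo.1 lo.2 < EU u1 hi.1 hi.2].
Proof.
move=> [v [w [[x1 [x2 [Nx ->]]] [y1 [y2 [Ny ->]]] vw]]].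
have [lt|gt] : EU u1 x1 x2 < EU u1 y1 y2 \/ EU u1 y1 y2 < EU u1 x1 x2.
  by move: vw => /eqP; rewrite neq_lt => /orP.
  by exists (y1, y2), (x1, x2).
by exists (x1, x2), (y1, y2).
Qed.

Lemma many_hilo2 r : manyVals (Vpay2 u1 u2 r) ->
  exists hi lo : prof, [/\ stageNash u1 u2 r hi.1 hi.2, stageNash u1 u2 r lo.1 lo.2 &
                          EU u2 lo.1 lo.2 < EU u2 hi.1 hi.2].
Proof.
move=> [v [w [[x1 [x2 [Nx ->]]] [y1 [y2 [Ny ->]]] vw]]].
have [lt|gt] : EU u2 x1 x2 < EU u2 y1 y2 \/ EU u2 y1 y2 < EU u2 x1 x2.
  by move: vw => /eqP; rewrite neq_lt => /orP.
  by exists (y1, y2), (x1, x2).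
by exists (x1, x2), (y1, y2).
Qed.

Lemma hilo_N0 r (P : prof -> R) : (exists hi lo : prof, [/\ stageNash u1 u2 r hi.1 hi.2,
   stageNash u1 u2 r lo.1 lo.2 & P lo < P hi]) -> exists N0 : prof, stageNash u1 u2 r N0.1 N0.2.
Proof. by case=> hi [lo [N _ _]]; exists hi. Qed.

Lemma deep_info r : LS u1 u2 r -> exists s1 s2,
  [/\ avail1 r s1, avail2 r s2, ~ stageNash u1 u2 r s1 s2,
      (atmost1 (Vpay1 u1 u2 r) -> forall b1, EU u1 (pure_mixed b1) s2 <= EU u1 s1 s2) &
      ((atmost1 (Vpay2 u1 u2 r) -> forall b2, EU u2 s1 (pure_mixed b2) <= EU u2 s1 s2) /\
      (r = MP -> forall a2, s2 = pure_mixed a2 -> forall a a', s1 a != 0 -> s1 a' != 0 ->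
        exists ds : seq R, (forall d, d \in ds -> Dset u1 u2 d) /\
          u1 a a2 - u1 a' a2 = \sum_(d <- ds) d))].
Proof.
move=> /deepest [T [m1 [m2 [h [S hs nN D]]]]].
have [B1 B2] := BR_const S hs D.
case: (S) => av1 [av2 _].
exists (m1 h), (m2 h); split => //; split => //.
move=> Er; subst r => a2 E a a2' sa sa2; exact: (Dcond S hs D E sa sa2).
Qed.

Lemma notLS_atmost r : atmost1 (Vpay1 u1 u2 r) -> atmost1 (Vpay2 u1 u2 r) -> ~ LS u1 u2 r.
Proof.
move=> A1' A2' /deep_info [s1 [s2 [a1 a2 nN B1 [B2 _]]]].
by apply: nN; apply/stageNashP; split => //; [apply: B1 | apply: B2].
Qed.

Lemma EU2_le_pure (s1 : {ffun A1 -> R}) x y :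
  mixed s1 -> EU u2 s1 (pure_mixed y) < EU u2 s1 (pure_mixed x) ->
  exists b, s1 b != 0 /\ u2 b y < u2 b x.
Proof.
move=> [s0 _] lt; apply: NNPP => H; move: lt; apply/negP; rewrite -leNgt !EU_pure2.
apply: ler_sum => b _; have [->|sb] := eqVneq (s1 b) 0; first by rewrite !mul0r.
apply: ler_wpM2l => //; rewrite leNgt; apply/negP => l; apply: H; by exists b.
Qed.

Lemma BR_supp (s1 : {ffun A1 -> R}) a2 b : mixed s1 -> s1 b != 0 ->
  (forall b1, u1 b1 a2 <= EU u1 s1 (pure_mixed a2)) -> forall b', u1 b' a2 <= u1 b a2.
Proof.
move=> ms sb B b'; have := B b'; rewrite EU_pure2 => h.
have B' : forall c, u1 c a2 <= \sum_a1 s1 a1 * u1 a1 a2.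
  by move=> c; have := B c; rewrite EU_pure2.
by rewrite (mix_eq_supp ms B' (erefl _) sb).
Qed.

Lemma Cmp_LS : Cmp u1 u2 -> LS u1 u2 MP.
Proof.
case=> [[m1 m2 [s1 [a2 [ms nN]]]] | [[m1 o2 [s1 [a1' [a2 [ms lt BR2 HD]]]]] | [o1 m2 [s1 [a2 [a2' [ms lt BR1]]]]]]].
- have [b nb] : exists b, ~ stageNash u1 u2 MP (pure_mixed b) (pure_mixed a2).
    case: (classic (forall b1, EU u1 (pure_mixed b1) (pure_mixed a2) <= EU u1 s1 (pure_mixed a2))) => B1.
      case: (classic (forall b2, EU u2 s1 (pure_mixed b2) <= EU u2 s1 (pure_mixed a2))) => B2.
        by exfalso; apply: nN; apply/stageNashP; split; [by split | exact: avail2_pure | done | done].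
      have [b2 lt2] : exists b2, EU u2 s1 (pure_mixed a2) < EU u2 s1 (pure_mixed b2).
        apply: NNPP => H; apply: B2 => b2; rewrite leNgt; apply/negP => l; apply: H; by exists b2.
      have [b [_ lb]] := EU2_le_pure ms lt2.
      exists b; case/stageNashP => _ _ _ /(_ b2); rewrite !EU_pp; lra.
    have [b1 lt1] : exists b1, EU u1 s1 (pure_mixed a2) < EU u1 (pure_mixed b1) (pure_mixed a2).
      apply: NNPP => H; apply: B1 => b1; rewrite leNgt; apply/negP => l; apply: H; by exists b1.
    rewrite EU_pp EU_pure2 in lt1.
    have [b lb] : exists b, u1 b a2 < u1 b1 a2.
      apply: NNPP => H; move: lt1; apply/negP; rewrite -leNgt; apply: mix_ge => // b.
      rewrite leNgt; apply/negP => l; apply: H; by exists b.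
    exists b; case/stageNashP => _ _ /(_ b1) + _; rewrite !EU_pp; lra.
  have [hi1 [lo1 H1]] := many_hilo1 m1; have [hi2 [lo2 H2]] := many_hilo2 m2.
  apply: (pure_LS nb); first by exists hi1; case: H1.
    by right; exists hi1, lo1.
  by right; exists hi2, lo2.
- have [a [sa HD']] : exists a, s1 a != 0 /\ forall a', s1 a' != 0 -> a' != a -> exists ds : seq R,
      (forall d, d \in ds -> Dset u1 u2 d) /\ u1 a a2 - u1 a' a2 = \sum_(d <- ds) d.
    case: (ltnP 1 #|supp s1|) => hc.
      have [a ain H] := HD hc; exists a; split; first by move: ain; rewrite inE.
      by move=> a' sa' na; apply: H => //; rewrite inE.
    have [a sa] := mix_exists ms; exists a; split => // a' sa' na.
    exfalso; move: hc; rewrite leqNgt => /negP; apply; apply/card_gt1P.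
    by exists a', a; rewrite !inE sa sa' na.
  exact: mixed_LS ms sa lt BR2 HD' m1 o2.
- have [b [sb lb]] := EU2_le_pure ms lt.
  have B1 : forall b1, u1 b1 a2 <= EU u1 s1 (pure_mixed a2).
    by move=> b1; have := BR1 _ (mixed_pure R b1); rewrite EU_pp.
  have BR := BR_supp ms sb B1.
  have [hi2 [lo2 H2]] := many_hilo2 m2.
  apply: (@pure_LS _ _ _ u1 u2 MP b a2).
  + by case/stageNashP => _ _ _ /(_ a2'); rewrite !EU_pp; lra.
  + by exists hi2; case: H2.
  + by left.
  + by right; exists hi2, lo2.
Qed.

Lemma LS_Cmp : LS u1 u2 MP -> Cmp u1 u2.
Proof.
move=> /deep_info [s1 [s2 [av1 av2 nN B1 [B2 D]]]].
have hMM : MP <> MM by [].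
have [a2 E] := pure_of_avail2 hMM av2; subst s2.
have ms := avail1_mixed av1.
case: (many_or_atmost (Vpay1 u1 u2 MP)) => [M1|A1'];
case: (many_or_atmost (Vpay2 u1 u2 MP)) => [M2|A2'].
- by left; split => //; exists s1, a2.
- right; left; split => //.
    have [v [w0 [Vv _ _]]] := M1; have [w Vw] := V1_V2 Vv; exact: atmost_one A2' Vw.
  have [a1' lt] : exists a1', EU u1 s1 (pure_mixed a2) < u1 a1' a2.
    apply: NNPP => H; apply: nN; apply/stageNashP; split => // [b1|]; last exact: B2.
    rewrite EU_pp leNgt; apply/negP => l; apply: H; by exists b1.
  exists s1, a1', a2; split => //; first exact: B2.
  move=> hc; case/card_gt1P: hc => x [y [xin yin nxy]]; exists x => // a' ain na.
  by apply: (D erefl a2 erefl); move: xin ain; rewrite !inE.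
- right; right; split => //.
    have [v [w0 [Vv _ _]]] := M2; have [w Vw] := V2_V1 Vv; exact: atmost_one A1' Vw.
  have [a2' lt] : exists a2', EU u2 s1 (pure_mixed a2) < EU u2 s1 (pure_mixed a2').
    apply: NNPP => H; apply: nN; apply/stageNashP; split => // [|b2]; first exact: B1.
    rewrite leNgt; apply/negP => l; apply: H; by exists b2.
  exists s1, a2, a2'; split => // t1 mt; rewrite EU_dec1; apply: mix_le => //; exact: B1.
- by exfalso; apply: nN; apply/stageNashP; split => //; [apply: B1 | apply: B2].
Qed.

Lemma pp_char a1 a2 :
  stageNash u1 u2 PP (pure_mixed a1) (pure_mixed a2) <->
  (forall b1, u1 b1 a2 <= u1 a1 a2) /\ (forall b2, u2 a1 b2 <= u2 a1 a2).
Proof.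
split.
  by case/stageNashP => _ _ B1 B2; split => b; [have := B1 b | have := B2 b]; rewrite !EU_pp.
case=> B1 B2; apply/stageNashP; split; try exact: avail1_pure; try exact: avail2_pure.
  by move=> b; rewrite !EU_pp.
by move=> b; rewrite !EU_pp.
Qed.

Lemma pp_pure (s1 : {ffun A1 -> R}) (s2 : {ffun A2 -> R}) : avail1 PP s1 -> avail2 PP s2 ->
  exists a1 a2, s1 = pure_mixed a1 /\ s2 = pure_mixed a2.
Proof.
move=> a1 a2; have [x1 ->] := pure_of_avail1 a1.
have hPM : PP <> MM by [].
by have [x2 ->] := pure_of_avail2 hPM a2; exists x1, x2.
Qed.

Lemma notLS_PP3 : atmost1 (Vpay2 u1 u2 PP) ->
  ~ (exists (a1 a1' : A1) (a2 : A2), u1 a1 a2 < u1 a1' a2 /\ (forall b2, u2 a1 b2 <= u2 a1 a2)) ->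
  ~ LS u1 u2 PP.
Proof.
move=> A2' nT /deep_info [s1 [s2 [av1 av2 nN _ [B2 _]]]].
have [a1 [a2 [E1 E2]]] := pp_pure av1 av2; subst s1 s2.
apply: nN; apply/pp_char.
have B2' : forall b2, u2 a1 b2 <= u2 a1 a2 by move=> b2; have := B2 A2' b2; rewrite !EU_pp.
split => // b1; rewrite leNgt; apply/negP => l; apply: nT; by exists a1, b1, a2.
Qed.

Lemma triple_LS : manyVals (Vpay1 u1 u2 PP) ->
  (exists (a1 a1' : A1) (a2 : A2), u1 a1 a2 < u1 a1' a2 /\ (forall b2, u2 a1 b2 <= u2 a1 a2)) ->
  LS u1 u2 PP.
Proof.
move=> M [a1 [a1' [a2 [lt B2]]]].
have [hi [lo H]] := many_hilo1 M.
apply: (@pure_LS _ _ _ u1 u2 PP a1 a2).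
- by move/pp_char => [/(_ a1')]; lra.
- by exists hi; case: H.
- by right; exists hi, lo.
- by left.
Qed.

Lemma symtriple_LS : manyVals (Vpay2 u1 u2 PP) ->
  (exists (a1 : A1) (a2 a2' : A2), (forall b1, u1 b1 a2 <= u1 a1 a2) /\ u2 a1 a2 < u2 a1 a2') ->
  LS u1 u2 PP.
Proof.
move=> M [a1 [a2 [a2' [B1 lt]]]].
have [hi [lo H]] := many_hilo2 M.
apply: (@pure_LS _ _ _ u1 u2 PP a1 a2).
- by move/pp_char => [_ /(_ a2')]; lra.
- by exists hi; case: H.
- by left.
- by right; exists hi, lo.
Qed.

Lemma nonNash_LS : manyVals (Vpay1 u1 u2 PP) -> manyVals (Vpay2 u1 u2 PP) ->
  (exists a1 a2, ~ stageNash u1 u2 PP (pure_mixed a1) (pure_mixed a2)) -> LS u1 u2 PP.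
Proof.
move=> M1 M2 [a1 [a2 nN]].
have [hi [lo H]] := many_hilo1 M1; have [hi2 [lo2 H2]] := many_hilo2 M2.
apply: (@pure_LS _ _ _ u1 u2 PP a1 a2) => //.
- by exists hi; case: H.
- by right; exists hi, lo.
- by right; exists hi2, lo2.
Qed.

Lemma V1MP_sub : ~ (exists (a1 : A1) (a2 a2' : A2),
     (forall b1, u1 b1 a2 <= u1 a1 a2) /\ u2 a1 a2 < u2 a1 a2') ->
  forall v, Vpay1 u1 u2 MP v -> Vpay1 u1 u2 PP v.
Proof.
move=> nS v [s1 [s2 [N ->]]].
have [ms av2] : mixed s1 /\ avail2 MP s2 by case: N => [[]].
have hMM : MP <> MM by [].
have [a2 E] := pure_of_avail2 hMM av2; subst s2.
have [b sb] := mix_exists ms.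
case/stageNashP: N => _ _ B1 _.
have B1' : forall b1, u1 b1 a2 <= EU u1 s1 (pure_mixed a2).
  by move=> b1; have := B1 b1; rewrite EU_pp.
have BR := BR_supp ms sb B1'.
have B2 : forall b2, u2 b b2 <= u2 b a2.
  move=> b2; rewrite leNgt; apply/negP => l; apply: nS; by exists b, a2, b2.
exists (pure_mixed b), (pure_mixed a2); split; first by apply/pp_char.
rewrite EU_pp EU_pure2; apply: (mix_supp_eq ms) => c sc.
have B1'' : forall c, u1 c a2 <= \sum_a1 s1 a1 * u1 a1 a2.
  by move=> c'; have := B1' c'; rewrite EU_pure2.
by rewrite (mix_eq_supp ms B1'' (erefl _) sc) (mix_eq_supp ms B1'' (erefl _) sb).
Qed.

Lemma allNash_noCmp : (forall a1 a2, stageNash u1 u2 PP (pure_mixed a1) (pure_mixed a2)) ->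
  ~ Cmp u1 u2.
Proof.
move=> AN.
have P1 : forall b1 b a2, u1 b1 a2 <= u1 b a2.
  by move=> b1 b a2; have /pp_char [/(_ b1) h _] := AN b a2.
have P2 : forall b b2 a2, u2 b b2 <= u2 b a2.
  by move=> b b2 a2; have /pp_char [_ /(_ b2) h] := AN b a2.
have G1 : forall (s1 : {ffun A1 -> R}) a1' a2, mixed s1 -> u1 a1' a2 <= EU u1 s1 (pure_mixed a2).
  by move=> s1 a1' a2 ms; rewrite EU_pure2; apply: mix_ge.
have G2 : forall (s1 : {ffun A1 -> R}) b2 a2, mixed s1 ->
    EU u2 s1 (pure_mixed b2) <= EU u2 s1 (pure_mixed a2).
  move=> s1 b2 a2 [s0 _]; rewrite !EU_pure2; apply: ler_sum => b _.
  by apply: ler_wpM2l.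
case=> [[_ _ [s1 [a2 [ms nN]]]] | [[_ _ [s1 [a1' [a2 [ms lt _ _]]]]] | [_ _ [s1 [a2 [a2' [ms lt _]]]]]]].
- apply: nN; apply/stageNashP; split; [by split | exact: avail2_pure | | ].
    by move=> b1; rewrite EU_pp; apply: G1.
  by move=> b2; apply: G2.
- by have := G1 s1 a1' a2 ms; lra.
- by have := G2 s1 a2' a2 ms; lra.
Qed.

End Main.

Unset Implicit Arguments.
Set Strict Implicit.
Set Printing Implicit Defensive.

Theorem mainTheorem11 (R : realType) (A1 A2 : finType)
    (hA1 : (0 < #|A1|)%N) (hA2 : (0 < #|A2|)%N)
    (u1 u2 : A1 -> A2 -> R) :
  (~ LS u1 u2 PP /\ LS u1 u2 MP) <->
  [\/ [/\ noVal (Vpay1 u1 u2 PP), noVal (Vpay2 u1 u2 PP) & Cmp u1 u2],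
      [/\ oneVal (Vpay1 u1 u2 PP), oneVal (Vpay2 u1 u2 PP) & Cmp u1 u2] |
      [/\ manyVals (Vpay1 u1 u2 PP), oneVal (Vpay2 u1 u2 PP),
          ~ (exists (a1 a1' : A1) (a2 : A2),
               u1 a1 a2 < u1 a1' a2 /\ (forall b2 : A2, u2 a1 b2 <= u2 a1 a2)) &
          Cmp u1 u2]].
Proof.
split.
- case=> nLS LSm; have C := LS_Cmp LSm.
  case: (classic (noVal (Vpay1 u1 u2 PP))) => N1.
    apply: Or31; split => // w /V2_V1 [v Vv]; exact: N1 Vv.
  have [v Vv] : exists v, Vpay1 u1 u2 PP v.
    by apply: NNPP => H; apply: N1 => v Vv; apply: H; exists v.
  have [w Vw] := V1_V2 Vv.
  case: (many_or_atmost (Vpay1 u1 u2 PP)) => [M1|A1'];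
  case: (many_or_atmost (Vpay2 u1 u2 PP)) => [M2|A2'].
  + exfalso; case: (classic (exists a1 a2, ~ stageNash u1 u2 PP (pure_mixed a1) (pure_mixed a2))) => H.
      by apply: nLS; apply: nonNash_LS.
    apply: (allNash_noCmp _ C) => a1 a2; apply: NNPP => nN; apply: H; by exists a1, a2.
  + apply: Or33; split => //; first exact: atmost_one A2' Vw.
    by move=> T; apply: nLS; apply: triple_LS.
  + exfalso.
    case: (classic (exists (a1 : A1) (a2 a2' : A2),
       (forall b1, u1 b1 a2 <= u1 a1 a2) /\ u2 a1 a2 < u2 a1 a2')) => S.
      by apply: nLS; apply: symtriple_LS.
    have Sub := V1MP_sub S.
    case: C => [[[x [y [Vx Vy nxy]]] _ _] | [[[x [y [Vx Vy nxy]]] _ _] | [_ _ [s1 [a2 [a2' [ms lt BR1]]]]]]].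
    * by apply: nxy; apply: A1'; apply: Sub.
    * by apply: nxy; apply: A1'; apply: Sub.
    * have [b [sb lb]] := EU2_le_pure ms lt.
      have B1 : forall b1, u1 b1 a2 <= EU u1 s1 (pure_mixed a2).
        by move=> b1; have := BR1 _ (mixed_pure R b1); rewrite EU_pp.
      apply: S; exists b, a2, a2'; split => //; exact: BR_supp ms sb B1.
  + apply: Or32; split => //; [exact: atmost_one A1' Vv | exact: atmost_one A2' Vw].
- case=> [[N1 N2 C]|[O1 O2 C]|[M1 O2 nT C]]; split; try exact: Cmp_LS.
  + by apply: notLS_atmost; apply: no_atmost.
  + by apply: notLS_atmost; apply: one_atmost.
  + by apply: notLS_PP3 => //; apply: one_atmost.
Qed.
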